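(* Let $G$ be a finitely generated group and let $F=(F_n)_{n=1}^\infty$ be a sequence of finite subsets of $G$ that is both left- and right-Følner. Then \[\frac{|\{C\in\mathcal{C}(G):C\cap F_n\ne\varnothing\text{ and }C\not\subset F_n\}|}{|F_n|}\to0\] as $n\to\infty$. In particular, $\textup{cr}_F(G)=\limsup_{n\to\infty}\frac{|\{C\in\mathcal{C}(G):C\subset F_n\}|}{|F_n|}$.
   Context: $\mathcal{C}(G)$ is the set of conjugacy classes of $G$. $F$ is left-Følner if $|xF_n\triangle F_n|/|F_n|\to0$ for every $x\in G$, right-Følner if $|F_nx\triangle F_n|/|F_n|\to0$ for every $x\in G$. $\textup{cr}_F(G)=\limsup_{n\to\infty}\frac{|\{C\in\mathcal{C}(G):C\cap F_n\ne\varnothing\}|}{|F_n|}$. *)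

(* Defs.v *)
From HB Require Import structures.
From mathcomp Require Import all_boot all_order all_algebra.
From mathcomp Require Import finmap.
From mathcomp Require Import all_classical all_reals all_analysis.
Set Implicit Arguments. Unset Strict Implicit. Unset Printing Implicit Defensive.
Import Order.TTheory GRing.Theory Num.Theory.
Import numFieldNormedType.Exports.
Local Open Scope classical_set_scope.
Local Open Scope fset_scope.

Record group_laws (G : Type) (mul : G -> G -> G) (inv : G -> G) (one : G) : Prop := {
  gl_assoc : forall x y z, mul x (mul y z) = mul (mul x y) z;
  gl_mul1g : forall x, mul one x = x;
  gl_mulg1 : forall x, mul x one = x;
  gl_mulVg : forall x, mul (inv x) x = one;
  gl_mulgV : forall x, mul x (inv x) = one }.

Definition finitely_generated (G : choiceType) (mul : G -> G -> G) (inv : G -> G)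
  (one : G) : Prop :=
  exists S : seq G, forall g : G, exists w : seq G,
    (forall s, s \in w -> (s \in S) || (inv s \in S)) /\
    g = foldr mul one w.

Definition ltrans (G : choiceType) (mul : G -> G -> G) (x : G) (F : {fset G}) :
  {fset G} := [fset mul x y | y in F].
Definition rtrans (G : choiceType) (mul : G -> G -> G) (F : {fset G}) (x : G) :
  {fset G} := [fset mul y x | y in F].

Definition fsymdiff (G : choiceType) (A B : {fset G}) : {fset G} :=
  fsetU (fsetD A B) (fsetD B A).

Section Folner.
Context (R : realType) (G : choiceType) (mul : G -> G -> G).
Local Open Scope ring_scope.

Definition left_Folner (F : nat -> {fset G}) : Prop :=
  forall x : G, (fun n => (#|` fsymdiff (ltrans mul x (F n)) (F n)|%:R
                           / #|` F n|%:R : R)) @ \oo --> 0.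

Definition right_Folner (F : nat -> {fset G}) : Prop :=
  forall x : G, (fun n => (#|` fsymdiff (rtrans mul (F n) x) (F n)|%:R
                           / #|` F n|%:R : R)) @ \oo --> 0.
End Folner.

(* cardinality of a (finite) classical set; 0 if infinite *)
Definition fcard_set (T : choiceType) (A : set T) : nat := #|` fset_set A|.

Local Close Scope fset_scope.
Local Open Scope classical_set_scope.

Definition conj_class (G : Type) (mul : G -> G -> G) (inv : G -> G) (x : G) : set G :=
  [set mul (inv g) (mul x g) | g in setT].

Definition conj_classes (G : Type) (mul : G -> G -> G) (inv : G -> G) : set (set G) :=
  [set C | exists x, C = conj_class mul inv x].

Definition n_classes_meeting (G : choiceType) mul inv (F : {fset G}) : nat :=
  fcard_set ( [set C | conj_classes mul inv C /\ (C `&` [set x | x \in F] !=set0)]).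

Definition n_classes_boundary (G : choiceType) mul inv (F : {fset G}) : nat :=
  fcard_set ( [set C | conj_classes mul inv C /\ (C `&` [set x | x \in F] !=set0)
                        /\ ~ (C `<=` [set x | x \in F])]).

Definition n_classes_inside (G : choiceType) mul inv (F : {fset G}) : nat :=
  fcard_set ( [set C | conj_classes mul inv C /\ C `<=` [set x | x \in F]]).

Definition cr (R : realType) (G : choiceType) mul inv (F : nat -> {fset G}) : R :=
  limn_sup (fun n => ((n_classes_meeting mul inv (F n))%:R / #|` F n|%:R)%R).

(* Main.v *)
Require Import Defs.
From HB Require Import structures.
From mathcomp Require Import all_boot all_order all_algebra.
From mathcomp Require Import finmap.
From mathcomp Require Import all_classical all_reals all_analysis.
Import Order.TTheory GRing.Theory Num.Theory.
Import numFieldNormedType.Exports.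
Local Open Scope classical_set_scope.
Set Implicit Arguments. Unset Strict Implicit. Unset Printing Implicit Defensive.

Lemma card_im (T T' : choiceType) (f : T -> T') (A : {fset T}) :
  (#|` [fset f x | x in A]%fset| <= #|` A|)%N.
Proof. exact: leq_imfset_card. Qed.

Section Grp.
Variables (G : choiceType) (mul : G -> G -> G) (inv : G -> G) (one : G).
Hypothesis HG : group_laws mul inv one.

Let assoc := gl_assoc HG.
Let mul1g := gl_mul1g HG.
Let mulg1 := gl_mulg1 HG.
Let mulVg := gl_mulVg HG.
Let mulgV := gl_mulgV HG.

Lemma gmulKg x y : mul (inv x) (mul x y) = y.
Proof. by rewrite assoc mulVg mul1g. Qed.
Lemma gmulKVg x y : mul x (mul (inv x) y) = y.
Proof. by rewrite assoc mulgV mul1g. Qed.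
Lemma ginvMg x y : inv (mul x y) = mul (inv y) (inv x).
Proof.
have H : mul (mul x y) (mul (inv y) (inv x)) = one.
  by rewrite -assoc (assoc y) mulgV mul1g mulgV.
by have := gmulKg (mul x y) (mul (inv y) (inv x)); rewrite H mulg1.
Qed.
Lemma ginvgK x : inv (inv x) = x.
Proof. by have := gmulKg (inv x) x; rewrite mulVg mulg1. Qed.
Lemma ginv1 : inv one = one.
Proof. by have := mulVg one; rewrite mulg1. Qed.

Definition cj (y g : G) := mul (inv g) (mul y g).

Lemma cj_cj y g h : cj (cj y g) h = cj y (mul g h).
Proof. by rewrite /cj ginvMg !assoc. Qed.

Lemma cj1 y : cj y one = y.
Proof. by rewrite /cj ginv1 mul1g mulg1. Qed.

Lemma class_memE x y : conj_class mul inv x y <-> exists g, y = cj x g.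
Proof.
split; first by case=> g _ <-; exists g.
by case=> g ->; exists g.
Qed.

Lemma class_mem x : conj_class mul inv x x.
Proof. by apply/class_memE; exists one; rewrite cj1. Qed.

Lemma class_eq x y : conj_class mul inv x y ->
  conj_class mul inv y = conj_class mul inv x.
Proof.
case/class_memE=> g ->; apply/seteqP; split=> z /class_memE [h ->];
  apply/class_memE.
  by exists (mul g h); rewrite cj_cj.
by exists (mul (inv g) h); rewrite cj_cj gmulKVg.
Qed.

Lemma escape (F : {fset G}) (T : seq G) (w : seq G) :
  (forall s, s \in w -> s \in T) -> forall c, c \in F ->
  cj c (foldr mul one w) \notin F ->
  exists y s, [/\ s \in T, y \in F, cj y s \notin F & conj_class mul inv c y].
Proof.
elim: w => [|s w IH] wT c cF /=; first by rewrite cj1 cF.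
rewrite -cj_cj => Hn.
case: (boolP (cj c s \in F)) => Hs.
  have [|y [s' [H1 H2 H3 H4]]] := IH _ _ Hs Hn.
    by move=> t tw; apply: wT; rewrite inE tw orbT.
  exists y, s'; split => //.
  have <- : conj_class mul inv (cj c s) = conj_class mul inv c.
    by apply: class_eq; apply/class_memE; exists s.
  done.
exists c, s; split => //; last exact: class_mem.
by apply: wT; rewrite inE eqxx.
Qed.

Local Open Scope fset_scope.
Definition Xs (s : G) (F : {fset G}) : {fset G} :=
  (F `\` ltrans mul s F) `|` ltrans mul s (F `\` rtrans mul F (inv s)).

Lemma in_Xs (F : {fset G}) s y : y \in F -> cj y s \notin F -> y \in Xs s F.
Proof.
move=> yF Hn; rewrite /Xs in_fsetU; case: (boolP (mul (inv s) y \in F)) => Hz.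
  apply/orP; right; rewrite -(gmulKVg s y); apply: in_imfset => /=.
  rewrite in_fsetD Hz andbT; apply/negP => /imfsetP [f /= fF Ef].
  move: Hn; rewrite /cj assoc Ef -assoc mulVg mulg1 fF //.
apply/orP; left; rewrite in_fsetD yF andbT; apply/negP => /imfsetP [f /= fF Ef].
by move: Hz; rewrite Ef gmulKg fF.
Qed.

Definition dL s (F : {fset G}) := #|` fsymdiff (ltrans mul s F) F|.
Definition dR s (F : {fset G}) := #|` fsymdiff (rtrans mul F s) F|.

Lemma card_Xs s F : (#|` Xs s F| <= dL s F + dR (inv s) F)%N.
Proof.
rewrite /Xs; apply: (leq_trans (leq_card_fsetU _ _).1); apply: leq_add.
  by apply: fsubset_leq_card; rewrite /fsymdiff fsubsetUr.
apply: (@leq_trans #|` (F `\` rtrans mul F (inv s))|); first exact: card_im.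
by apply: fsubset_leq_card; rewrite /fsymdiff fsubsetUr.
Qed.

Definition BsetT (T : seq G) F := foldr (fun s acc => Xs s F `|` acc) fset0 T.
Definition bnd (T : seq G) F := foldr (fun s acc => (dL s F + dR (inv s) F + acc)%N) 0%N T.

Lemma card_BsetT T F : (#|` BsetT T F| <= bnd T F)%N.
Proof.
rewrite /BsetT /bnd; elim: T => [|s T IH] /=; first by [].
apply: (leq_trans (leq_card_fsetU _ _).1); apply: leq_add => //; exact: card_Xs.
Qed.

Lemma in_BsetT T F s y : s \in T -> y \in Xs s F -> y \in BsetT T F.
Proof.
elim: T => [|t T IH] //= sT yX; rewrite in_fsetU.
move: sT; rewrite inE => /orP [/eqP Est|sT]; first by rewrite -Est yX.
by rewrite IH ?orbT.
Qed.

Local Close Scope fset_scope.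

Lemma bd_sub S
  (HS : forall g, exists w, (forall s, s \in w -> (s \in S) || (inv s \in S)) /\ g = foldr mul one w)
  (F : {fset G}) :
  [set C | conj_classes mul inv C /\ (C `&` [set x | x \in F] !=set0) /\ ~ (C `<=` [set x | x \in F])]
  `<=` conj_class mul inv @` [set` BsetT (S ++ map inv S) F].
Proof.
move=> C [[x ->] [[c [Cc cF]] nsub]].
have [d [Cd dF]] : exists d, conj_class mul inv x d /\ d \notin F.
  case: (pselect (exists d, conj_class mul inv x d /\ d \notin F)) => // H.
  exfalso; apply: nsub => z Cz /=; apply/negPn/negP => zF; by apply: H; exists z.
have Ec := class_eq Cc.
have : conj_class mul inv c d by rewrite Ec.
case/class_memE => h Eh.
have [w [Hw Ehw]] := HS h.
have wT : forall s, s \in w -> s \in S ++ map inv S.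
  move=> s /Hw /orP[sS|isS]; rewrite mem_cat ?sS //; apply/orP; right.
  by apply/mapP; exists (inv s) => //; rewrite ginvgK.
have Hn : cj c (foldr mul one w) \notin F by rewrite -Ehw -Eh.
have [y [s [sT yF ys Cy]]] := escape wT cF Hn.
exists y; last by rewrite (class_eq Cy) Ec.
exact: in_BsetT sT (in_Xs yF ys).
Qed.

Lemma inside_sub (F : {fset G}) :
  [set C | conj_classes mul inv C /\ C `<=` [set x | x \in F]]
  `<=` conj_class mul inv @` [set` F].
Proof. by move=> C [[x ->] sub]; exists x => //; exact: sub _ (class_mem x). Qed.

Lemma meeting_sub (F : {fset G}) :
  [set C | conj_classes mul inv C /\ (C `&` [set x | x \in F] !=set0)]
  `<=` conj_class mul inv @` [set` F].
Proof. by move=> C [[x ->] [c [Cc cF]]]; exists c => //; rewrite (class_eq Cc). Qed.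
End Grp.

Lemma fcard_le_img (T T' : choiceType) (f : T -> T') (A : set T') (B : {fset T}) :
  A `<=` f @` [set` B] -> (fcard_set A <= #|` B|)%N.
Proof.
move=> AB; have fX : finite_set (f @` [set` B]) by apply: finite_image; exact: finite_fset.
have fA : finite_set A := sub_finite_set AB fX.
rewrite /fcard_set; apply: (@leq_trans #|` fset_set (f @` [set` B])|).
  by apply: fsubset_leq_card; rewrite -fset_set_sub.
by rewrite fset_set_image ?finite_fset // set_fsetK; exact: card_im.
Qed.

Lemma meeting_eq (G : choiceType) (mul : G -> G -> G) (inv : G -> G) (one : G)
  (HG : group_laws mul inv one) (F : {fset G}) :
  n_classes_meeting mul inv F = (n_classes_inside mul inv F + n_classes_boundary mul inv F)%N.
Proof.
rewrite /n_classes_meeting /n_classes_inside /n_classes_boundary /fcard_set.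
set M := [set C | _ /\ _ !=set0].
set I := [set C | _ /\ _ `<=` _].
set Bd := [set C | _ /\ _ /\ _].
have fF : finite_set (conj_class mul inv @` [set` F]) by apply: finite_image; exact: finite_fset.
have fI : finite_set I := sub_finite_set (@inside_sub _ _ _ _ HG F) fF.
have fB : finite_set Bd.
  apply: (sub_finite_set _ (sub_finite_set (@meeting_sub _ _ _ _ HG F) fF)).
  by move=> C [HC [HM _]]; split.
have -> : M = I `|` Bd.
  apply/seteqP; split.
    move=> C [HC HM]; case: (pselect (C `<=` [set x | x \in F])) => H; [left|right]; by split.
  move=> C [[HC Hsub]|[HC [HM _]]]; split => //.
  case: (HC) => x Ex; exists x; split; first by rewrite Ex; exact: (class_mem HG).
  by apply: Hsub; rewrite Ex; exact: (class_mem HG).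
have D : I `&` Bd = set0.
  by apply/seteqP; split => C // [[_ s] [_ [_ ns]]].
have := cardfsUI (fset_set I) (fset_set Bd).
by rewrite -fset_setI // D fset_set0 cardfs0 addn0 fset_setU.
Qed.


Local Open Scope ring_scope.

Lemma frac_le1 (R : realType) (k m : nat) : (k <= m)%N -> k%:R / m%:R <= (1 : R).
Proof.
move=> km; case: (posnP m) => [->|m0]; first by rewrite invr0 mulr0 ler01.
by rewrite ler_pdivrMr ?ltr0n // mul1r ler_nat.
Qed.

Lemma bounded01 (R : realType) (u : nat -> R) : (forall n, 0 <= u n <= 1) ->
  bounded_fun (u : R^o^nat).
Proof.
move=> H; rewrite /bounded_near; near=> M => n _ /=.
have /andP [h0 h1] := H n.
rewrite ger0_norm //; apply: le_trans h1 _.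
by near: M; apply: nbhs_pinfty_ge; exact: num_real.
Unshelve. all: by end_near. Qed.

Theorem proposition8p1 (R : realType) (G : choiceType)
  (mul : G -> G -> G) (inv : G -> G) (one : G)
  (HG : group_laws mul inv one)
  (Hfg : finitely_generated mul inv one)
  (F : nat -> {fset G})
  (HL : left_Folner R mul F) (HR : right_Folner R mul F) :
  ((fun n => (n_classes_boundary mul inv (F n))%:R / #|` F n|%:R : R)
     @ \oo --> 0) /\
  cr R mul inv F =
    limn_sup (fun n => (n_classes_inside mul inv (F n))%:R / #|` F n|%:R : R).
Proof.
case: Hfg => S HS.
set b := (fun n => (n_classes_boundary mul inv (F n))%:R / #|` F n|%:R : R).
set i := (fun n => (n_classes_inside mul inv (F n))%:R / #|` F n|%:R : R).
have bcvg : b @ \oo --> 0.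
  have hcvg : forall T, (fun n => (bnd mul inv T (F n))%:R / #|` F n|%:R : R) @ \oo --> 0.
    elim => [|s T' IH] /=.
      have -> : (fun n => (bnd mul inv [::] (F n))%:R / #|` F n|%:R : R) = fun=> 0.
        by apply/funext => n; rewrite mul0r.
      exact: cvg_cst.
    have -> : (fun n => (bnd mul inv (s :: T') (F n))%:R / #|` F n|%:R : R) =
      (fun n => (dL mul s (F n))%:R / #|` F n|%:R + (dR mul (inv s) (F n))%:R / #|` F n|%:R
         + (bnd mul inv T' (F n))%:R / #|` F n|%:R).
      by apply/funext => n; rewrite /= !natrD !mulrDl.
    have -> : (0 : R) = 0 + 0 + 0 by rewrite !addr0.
    apply: cvgD; last exact: IH.
    by apply: cvgD; [exact: HL s | exact: HR (inv s)].
  apply: (squeeze_cvgr (f := fun=> 0) _ _ (hcvg (S ++ map inv S))); last exact: cvg_cst.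
  near=> n; apply/andP; split.
    by rewrite /b divr_ge0 ?ler0n.
  rewrite /b ler_wpM2r ?invr_ge0 ?ler0n // ler_nat.
  have h1 := fcard_le_img (bd_sub HG HS (F:=F n)).
  by apply: (leq_trans h1); exact: card_BsetT.
split => //.
have bi : bounded_fun (i : R^o^nat).
  apply: bounded01 => n; rewrite /i divr_ge0 ?ler0n //=.
  exact/frac_le1/fcard_le_img/(inside_sub HG).
have bb : bounded_fun (b : R^o^nat) by apply: cvg_seq_bounded; apply/cvg_ex; exists 0.
have lb : limn_sup b = 0 := (cvg_limn_inf_sup bcvg).2.
have lnb : limn_sup (fun n => - b n) = 0.
  by have := (cvg_limn_inf_sup (cvgN bcvg)).2; rewrite oppr0 => <-.
rewrite /cr.
have -> : (fun n => (n_classes_meeting mul inv (F n))%:R / #|` F n|%:R : R) = i \+ b.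
  by apply/funext => n; rewrite /= (meeting_eq HG) natrD mulrDl.
apply/eqP; rewrite eq_le; apply/andP; split.
  by apply: le_trans (le_limn_supD bi bb) _; rewrite lb addr0.
have E : i = (i \+ b) \+ (fun n => - b n) by apply/funext => n; rewrite /= addrK.
have := le_limn_supD (bounded_funD bi bb) (bounded_funN bb).
by rewrite -E lnb addr0.
Unshelve. all: by end_near. Qed.
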